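(* Let $\theta\in\mathbb{K}\setminus\{0\}$ and let $(A,P)$ be a complete filtered Rota--Baxter algebra of weight $\theta$ over a field $\mathbb{K}$ of characteristic zero; put $\tilde P:=\theta\,\mathrm{id}_A-P$. Let $\chi_\theta:A_1\to A_1$ be the map defined by $$\chi_\theta(a)=a-\frac1\theta\,\mathrm{BCH}\Big(P\big(\chi_\theta(a)\big),\tilde P\big(\chi_\theta(a)\big)\Big),\qquad a\in A_1.$$ Then for all $a\in A_1$: (1) $\chi_\theta(a)=a+\frac1\theta\,\mathrm{BCH}\big(-P(\chi_\theta(a)),\theta a\big)$; (2) $\exp(\theta a)=\exp\big(P(\chi_\theta(a))\big)\exp\big(\tilde P(\chi_\theta(a))\big)$; (3) with $b\in A$ defined by $1+\theta b:=\exp(\theta a)$, the elements $x:=\exp\big(P(\chi_\theta(a))\big)^{-1}$ and $x':=\exp\big(\tilde P(\chi_\theta(a))\big)^{-1}$ are the unique solutions of the equations $x=1-P(x\,b)$ and $x'=1-\tilde P(b\,x')$ respectively.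
   Context: A Rota--Baxter algebra of weight $\theta$ is an associative $\mathbb{K}$-algebra $A$ with a linear map $P:A\to A$ satisfying $P(x)P(y)+\theta P(xy)=P(xP(y))+P(P(x)y)$ for all $x,y\in A$. A Rota--Baxter ideal is an ideal $I$ with $P(I)\subseteq I$. A complete filtered Rota--Baxter algebra is a Rota--Baxter algebra $(A,P)$ with a decreasing filtration $A=A_0\supseteq A_1\supseteq\cdots$ by Rota--Baxter ideals such that $A_mA_n\subseteq A_{m+n}$ and $A\cong\varprojlim A/A_n$. $\exp$ and $\log$ are the usual series, mutually inverse bijections between $A_1$ and $1+A_1$. $\mathrm{BCH}(x,y)$ is the Baker--Campbell--Hausdorff series, $\exp(x)\exp(y)=\exp(x+y+\mathrm{BCH}(x,y))$. The map $\chi_\theta$ is the unique map $A_1\to A_1$ satisfying the displayed fixed-point equation (obtained as the limit, in the filtration topology, of the iteration starting from $a$). *)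

(* Defs.v *)
From HB Require Import structures.
From mathcomp Require Import all_boot all_order all_algebra.
From Stdlib Require Import ClassicalEpsilon.
Set Implicit Arguments. Unset Strict Implicit. Unset Printing Implicit Defensive.
Import Order.TTheory GRing.Theory.
Local Open Scope ring_scope.

Section FilteredRB.
Variables (K : fieldType) (A : unitAlgType K) (F : nat -> {pred A}).

Definition rota_baxter (theta : K) (P : A -> A) : Prop :=
  forall x y : A, P x * P y + theta *: P (x * y) = P (x * P y) + P (P x * y).

Definition rb_filtration (P : A -> A) : Prop :=
  (forall x, x \in F 0) /\
  [/\ forall n x, x \in F n.+1 -> x \in F n,
      forall n, 0 \in F n /\ (forall x y, x \in F n -> y \in F n -> x + y \in F n),
      forall n a x, x \in F n -> (a * x \in F n) /\ (x * a \in F n),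
      forall n x, x \in F n -> P x \in F n &
      forall m n x y, x \in F m -> y \in F n -> x * y \in F (m + n)].

(* A ≅ lim A/F n : the canonical map A -> lim A / F n is injective
   (separated) and surjective (every compatible sequence of residues lifts). *)
Definition filt_complete : Prop :=
  (forall x, (forall n, x \in F n) -> x = 0) /\
  (forall u : nat -> A, (forall n, u n.+1 - u n \in F n) ->
     exists y, forall n, y - u n \in F n).

Definition filt_lim (u : nat -> A) (y : A) : Prop :=
  forall n, exists N, forall m, (N <= m)%N -> u m - y \in F n.

(* the limit (chosen classically; unique when F is separated) *)
Definition flim (u : nat -> A) : A := epsilon (inhabits 0) (filt_lim u).

Definition fexp (x : A) : A :=
  flim (fun n => \sum_(k < n) (k`!%:R)^-1 *: x ^+ k).

Definition flog (x : A) : A :=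
  flim (fun n => \sum_(k < n) ((-1) ^+ k / k.+1%:R) *: (x - 1) ^+ k.+1).

Definition BCH (x y : A) : A := flog (fexp x * fexp y) - x - y.

Definition Ptilde (theta : K) (P : A -> A) (x : A) : A := theta *: x - P x.

Definition chi_step (theta : K) (P : A -> A) (a c : A) : A :=
  a - theta^-1 *: BCH (P c) (Ptilde theta P c).

Definition chi (theta : K) (P : A -> A) (a : A) : A :=
  flim (fun n => iter n (chi_step theta P a) a).

End FilteredRB.

(* Main.v *)
Require Import Defs.
From HB Require Import structures.
From mathcomp Require Import all_boot all_order all_algebra ring zify.
From Stdlib Require Import ClassicalEpsilon.
Set Implicit Arguments. Unset Strict Implicit. Unset Printing Implicit Defensive.
Import Order.TTheory GRing.Theory.
Local Open Scope ring_scope.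
Record FG (K : fieldType) (A : unitAlgType K) (F : nat -> {pred A}) : Prop := FGmk {
  fg0 : forall x, x \in F 0%N;
  fgS : forall n x, x \in F n.+1 -> x \in F n;
  fgz : forall n, 0 \in F n;
  fgD : forall n x y, x \in F n -> y \in F n -> x + y \in F n;
  fgMl : forall n a x, x \in F n -> a * x \in F n;
  fgMr : forall n a x, x \in F n -> x * a \in F n;
  fgM : forall m n x y, x \in F m -> y \in F n -> x * y \in F (m + n)%N;
  fgsep : forall x, (forall n, x \in F n) -> x = 0;
  fgcompl : forall u : nat -> A, (forall n, u n.+1 - u n \in F n) ->
     exists y, forall n, y - u n \in F n }.

Section B.
Variables (K : fieldType) (A : unitAlgType K) (F : nat -> {pred A}).

Lemma FG_of (P : A -> A) : rb_filtration F P -> filt_complete F -> FG F.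
Proof.
move=> [h0 [hS hz hI hP hM]] [hsep hc]; split => //.
- by move=> n; case: (hz n).
- by move=> n; case: (hz n).
- by move=> n a x /(hI n a) [].
- by move=> n a x /(hI n a) [].
Qed.
End B.

Section C.
Variables (K : fieldType) (A : unitAlgType K) (F : nat -> {pred A}) (hF : FG F).

Lemma fN n x : x \in F n -> - x \in F n.
Proof. by move=> h; rewrite -mulN1r; apply: (fgMl hF). Qed.

Lemma fB n x y : x \in F n -> y \in F n -> x - y \in F n.
Proof. by move=> hx hy; apply: (fgD hF) => //; apply: fN. Qed.

Lemma fZ n (r : K) x : x \in F n -> r *: x \in F n.
Proof. by move=> h; rewrite -mulr_algl; apply: (fgMl hF). Qed.

Lemma fW m n x : (m <= n)%N -> x \in F n -> x \in F m.
Proof.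
move=> /subnKC <-; elim: (n - m)%N => [|d IH]; first by rewrite addn0.
by rewrite addnS => /(fgS hF); apply: IH.
Qed.

Lemma fsum n (I : Type) (r : seq I) (P : pred I) (f : I -> A) :
  (forall i, P i -> f i \in F n) -> \sum_(i <- r | P i) f i \in F n.
Proof.
move=> h; apply: (big_ind (fun y => y \in F n)) => //.
  exact: (fgz hF).
by move=> ???; apply: (fgD hF).
Qed.

Lemma fX1 x k : x \in F 1 -> x ^+ k \in F k.
Proof.
move=> hx; elim: k => [|k IH]; first exact: (fg0 hF).
by rewrite exprS; have := fgM hF hx IH; rewrite add1n.
Qed.

Lemma fXd x y k j : x \in F 1 -> y \in F 1 -> x - y \in F k ->
  x ^+ j.+1 - y ^+ j.+1 \in F (k + j)%N.
Proof.
move=> hx hy hd; elim: j => [|j IH]; first by rewrite !expr1 addn0.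
have -> : x ^+ j.+2 - y ^+ j.+2 = x * (x ^+ j.+1 - y ^+ j.+1) + (x - y) * y ^+ j.+1.
  by rewrite mulrBr mulrBl !exprS addrA subrK.
apply: (fgD hF).
  by have := fgM hF hx IH; rewrite add1n addnS.
by apply: (fgM hF) => //; apply: fX1.
Qed.

Lemma fX2 x y k j : x \in F 1 -> y \in F 1 -> x - y \in F k -> (0 < k)%N ->
  (2 <= j)%N -> x ^+ j - y ^+ j \in F k.+1.
Proof.
move=> hx hy hd k0; case: j => [|[|j]] // _.
apply: (fW (n := (k + j.+1)%N)); first by rewrite addnS ltnS leq_addr.
exact: fXd.
Qed.

Lemma fXB x y k j : x - y \in F k -> x ^+ j - y ^+ j \in F k.
Proof.
move=> hd; elim: j => [|j IH]; first by rewrite subrr; apply: (fgz hF).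
have -> : x ^+ j.+1 - y ^+ j.+1 = x * (x ^+ j - y ^+ j) + (x - y) * y ^+ j.
  by rewrite mulrBr mulrBl !exprS addrA subrK.
by apply: (fgD hF); [apply: (fgMl hF)|apply: (fgMr hF)].
Qed.

Lemma fsep_eq x y : (forall n, x - y \in F n) -> x = y.
Proof. by move=> h; apply/eqP; rewrite -subr_eq0; apply/eqP/(fgsep hF). Qed.

Lemma flim_eq u y : (forall n, y - u n \in F n) -> flim F u = y.
Proof.
move=> h.
have L : filt_lim F u y.
  move=> n; exists n => m hm; rewrite -opprB; apply: fN.
  exact: (fW hm).
have := epsilon_spec (inhabits 0) (filt_lim F u) (ex_intro _ y L).
rewrite -/(flim F u) => L'.
apply: fsep_eq => n.
have [N HN] := L n; have [N' HN'] := L' n.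
have := fB (HN (maxn N N') (leq_maxl _ _)) (HN' (maxn N N') (leq_maxr _ _)).
have e : forall a b c : A, a - b - (a - c) = c - b.
  by move=> a b c; rewrite opprB addrC addrA subrK.
by rewrite e.
Qed.

Lemma flim_tail u : (forall n, u n.+1 - u n \in F n) ->
  forall n, flim F u - u n \in F n.
Proof. by move=> /(fgcompl hF) [y hy]; rewrite (flim_eq hy). Qed.

End C.
Definition Esum (K : fieldType) (R : lalgType K) (N : nat) (x : R) : R :=
  \sum_(k < N) (k`!%:R)^-1 *: x ^+ k.
Definition Lsum (K : fieldType) (R : lalgType K) (N : nat) (z : R) : R :=
  \sum_(k < N) ((-1) ^+ k / k.+1%:R) *: z ^+ k.+1.

Section D.
Variables (K : fieldType) (A : unitAlgType K) (F : nat -> {pred A}) (hF : FG F).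

Lemma fexpE x : fexp F x = flim F (fun n => Esum n x).
Proof. by []. Qed.
Lemma flogE y : flog F y = flim F (fun n => Lsum n (y - 1)).
Proof. by []. Qed.

Lemma Esum_rec N (x : A) : Esum N.+1 x - Esum N x = (N`!%:R)^-1 *: x ^+ N.
Proof. by rewrite /Esum big_ord_recr /= addrAC subrr add0r. Qed.

Lemma Lsum_rec N (x : A) :
  Lsum N.+1 x - Lsum N x = ((-1) ^+ N / N.+1%:R) *: x ^+ N.+1.
Proof. by rewrite /Lsum big_ord_recr /= addrAC subrr add0r. Qed.

Lemma exp_tail x : x \in F 1 -> forall N, fexp F x - Esum N x \in F N.
Proof.
move=> hx; rewrite fexpE; apply: (flim_tail hF) => n.
by rewrite Esum_rec; apply: (fZ hF); apply: (fX1 hF).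
Qed.

Lemma log_tail y : y - 1 \in F 1 -> forall N, flog F y - Lsum N (y - 1) \in F N.
Proof.
move=> hy; rewrite flogE; apply: (flim_tail hF) => n.
rewrite Lsum_rec; apply: (fZ hF); apply: (fgS hF); exact: (fX1 hF).
Qed.

Lemma Esum1 (x : A) : Esum 1 x = 1.
Proof. by rewrite /Esum big_ord1 /= expr0 invr1 scale1r. Qed.

Lemma Lsum1 (x : A) : Lsum 1 x = x.
Proof. by rewrite /Lsum big_ord1 /= expr0 div1r invr1 scale1r expr1. Qed.

Lemma exp_F1 x : x \in F 1 -> fexp F x - 1 \in F 1.
Proof. by move=> hx; have := exp_tail hx 1; rewrite Esum1. Qed.

Lemma log_F1 y : y - 1 \in F 1 -> flog F y \in F 1.
Proof.
move=> hy; have := log_tail hy 1; rewrite Lsum1 => h.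
by have := fgD hF h hy; rewrite subrK.
Qed.

End D.
Section E.
Variables (K : fieldType) (A : unitAlgType K) (F : nat -> {pred A}) (hF : FG F).

Definition eqF n (x y : A) := x - y \in F n.

Lemma eqFxx n x : eqF n x x.
Proof. by rewrite /eqF subrr; apply: (fgz hF). Qed.
Lemma eqF_sym n x y : eqF n x y -> eqF n y x.
Proof. by rewrite /eqF => h; rewrite -opprB; apply: (fN hF). Qed.
Lemma eqF_trans n x y z : eqF n x y -> eqF n y z -> eqF n x z.
Proof.
rewrite /eqF => h1 h2; have := fgD hF h1 h2.
by rewrite addrA subrK.
Qed.
Lemma eqF_D n x y x' y' : eqF n x y -> eqF n x' y' -> eqF n (x + x') (y + y').
Proof.
rewrite /eqF => h1 h2; have := fgD hF h1 h2.
by rewrite opprD addrACA.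
Qed.
Lemma eqF_N n x y : eqF n x y -> eqF n (- x) (- y).
Proof. by rewrite /eqF => h; rewrite -opprD; apply: (fN hF). Qed.
Lemma eqF_B n x y x' y' : eqF n x y -> eqF n x' y' -> eqF n (x - x') (y - y').
Proof. by move=> h1 h2; apply: eqF_D => //; apply: eqF_N. Qed.
Lemma eqF_Z n r x y : eqF n x y -> eqF n (r *: x) (r *: y).
Proof. by rewrite /eqF => h; rewrite -scalerBr; apply: (fZ hF). Qed.
Lemma eqF_Ml n a x y : eqF n x y -> eqF n (a * x) (a * y).
Proof. by rewrite /eqF => h; rewrite -mulrBr; apply: (fgMl hF). Qed.
Lemma eqF_Mr n a x y : eqF n x y -> eqF n (x * a) (y * a).
Proof. by rewrite /eqF => h; rewrite -mulrBl; apply: (fgMr hF). Qed.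
Lemma eqF_W m n x y : (m <= n)%N -> eqF n x y -> eqF m x y.
Proof. by rewrite /eqF => h1 h2; apply: (fW hF h1). Qed.
Lemma eqF_0 n x : (eqF n x 0) = (x \in F n).
Proof. by rewrite /eqF subr0. Qed.
Lemma eqF_addr n x r : r \in F n -> eqF n (x + r) x.
Proof. by rewrite /eqF addrAC subrr add0r. Qed.
Lemma eqF_subE n x y : eqF n (x - y) 0 = eqF n x y.
Proof. by rewrite eqF_0. Qed.
Lemma eqF_sep x y : (forall n, eqF n x y) -> x = y.
Proof. exact: (fsep_eq hF). Qed.
Lemma eqF_sum n (I : Type) (r : seq I) (P : pred I) (f g : I -> A) :
  (forall i, P i -> eqF n (f i) (g i)) ->
  eqF n (\sum_(i <- r | P i) f i) (\sum_(i <- r | P i) g i).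
Proof.
move=> h; rewrite /eqF -sumrB; apply: (fsum hF) => i Pi; exact: h.
Qed.
Lemma eqF_M n x y x' y' : eqF n x y -> eqF n x' y' -> eqF n (x * x') (y * y').
Proof.
move=> h1 h2; apply: (eqF_trans (y := y * x')); first exact: eqF_Mr.
exact: eqF_Ml.
Qed.

Lemma Esum_B N (x y : A) :
  Esum N x - Esum N y = \sum_(j < N) (j`!%:R)^-1 *: (x ^+ j - y ^+ j).
Proof. by rewrite /Esum -sumrB; apply: eq_bigr => j _; rewrite scalerBr. Qed.

Lemma Lsum_B N (x y : A) :
  Lsum N x - Lsum N y = \sum_(j < N) ((-1) ^+ j / j.+1%:R) *: (x ^+ j.+1 - y ^+ j.+1).
Proof. by rewrite /Lsum -sumrB; apply: eq_bigr => j _; rewrite scalerBr. Qed.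

Lemma exp_lip x x' k : x \in F 1 -> x' \in F 1 -> eqF k x x' -> (0 < k)%N ->
  eqF k.+1 (fexp F x - fexp F x') (x - x').
Proof.
move=> hx hx' hd k0.
apply: (eqF_trans (y := Esum k.+1 x - Esum k.+1 x')).
  by apply: eqF_B; apply: (exp_tail hF).
rewrite Esum_B; case: k k0 hd => // k _ hd.
rewrite big_ord_recl big_ord_recl /= !expr0 !expr1 subrr scaler0 add0r.
rewrite [_`!]/= invr1 scale1r; apply: eqF_addr.
apply: (fsum hF) => i _; apply: (fZ hF); apply: (fX2 hF) => //.
Qed.

Lemma log_lip y y' k : y - 1 \in F 1 -> y' - 1 \in F 1 -> eqF k y y' -> (0 < k)%N ->
  eqF k.+1 (flog F y - flog F y') (y - y').
Proof.
move=> hy hy' hd k0.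
have e : (y - 1) - (y' - 1) = y - y' by rewrite opprB addrA subrK.
apply: (eqF_trans (y := Lsum k.+1 (y - 1) - Lsum k.+1 (y' - 1))).
  by apply: eqF_B; apply: (log_tail hF).
rewrite Lsum_B big_ord_recl /= !expr1 expr0 div1r invr1 scale1r e.
apply: eqF_addr.
apply: (fsum hF) => i _; apply: (fZ hF); apply: (fX2 hF) => //.
by rewrite /eqF e.
Qed.

End E.
Lemma sub4 (V : zmodType) (a b c d : V) : (a - c) - (b - d) = (a - b) - (c - d).
Proof. by rewrite !opprB addrACA [in RHS]addrACA addrC [in RHS]addrC [- c + _]addrC. Qed.

Lemma subDD (V : zmodType) (a b c d : V) : (a + b) - (c + d) = (a - c) + (b - d).
Proof. by rewrite opprD addrACA. Qed.

Section G.
Variables (K : fieldType) (A : unitAlgType K) (F : nat -> {pred A}) (hF : FG F).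

Lemma mul_F1 u v : u - 1 \in F 1 -> v - 1 \in F 1 -> u * v - 1 \in F 1.
Proof.
move=> hu hv; have := eqF_M hF hu hv; by rewrite mulr1.
Qed.

Lemma expmul_F1 x y : x \in F 1 -> y \in F 1 -> fexp F x * fexp F y - 1 \in F 1.
Proof. by move=> hx hy; apply: mul_F1; apply: (exp_F1 hF). Qed.

Lemma bch_F1 x y : x \in F 1 -> y \in F 1 -> BCH F x y \in F 1.
Proof.
move=> hx hy; rewrite /BCH; apply: (fB hF); last done.
apply: (fB hF) => //; apply: (log_F1 hF); exact: expmul_F1.
Qed.

Lemma expdiff x x' k : x \in F 1 -> x' \in F 1 -> eqF F k x x' -> (0 < k)%N ->
  fexp F x - fexp F x' \in F k.
Proof.
move=> hx hx' hd k0; have h := eqF_W hF (leqnSn k) (exp_lip hF hx hx' hd k0).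
have := fgD hF h hd; by rewrite subrK.
Qed.

Lemma expprod_lip x y x' y' k : x \in F 1 -> y \in F 1 -> x' \in F 1 -> y' \in F 1 ->
  eqF F k x x' -> eqF F k y y' -> (0 < k)%N ->
  eqF F k.+1 (fexp F x * fexp F y - fexp F x' * fexp F y') ((x - x') + (y - y')).
Proof.
move=> hx hy hx' hy' hdx hdy k0.
set ex := fexp F x; set ey := fexp F y; set ex' := fexp F x'; set ey' := fexp F y'.
have -> : ex * ey - ex' * ey' = (ex - ex') * ey + ex' * (ey - ey').
  by rewrite mulrBl mulrBr addrA subrK.
apply: (eqF_D hF).
  apply: (eqF_trans hF (y := (ex - ex') * 1)).
    rewrite /eqF -mulrBr -addn1; apply: (fgM hF); first exact: expdiff.
    exact: (exp_F1 hF).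
  by rewrite mulr1; apply: (exp_lip hF).
apply: (eqF_trans hF (y := 1 * (ey - ey'))).
  rewrite /eqF -mulrBl -add1n; apply: (fgM hF); last exact: expdiff.
  exact: (exp_F1 hF).
by rewrite mul1r; apply: (exp_lip hF).
Qed.

Lemma bch_lip x y x' y' k : x \in F 1 -> y \in F 1 -> x' \in F 1 -> y' \in F 1 ->
  eqF F k x x' -> eqF F k y y' -> (0 < k)%N ->
  eqF F k.+1 (BCH F x y) (BCH F x' y').
Proof.
move=> hx hy hx' hy' hdx hdy k0.
have W := expprod_lip hx hy hx' hy' hdx hdy k0.
set w := fexp F x * fexp F y in W *; set w' := fexp F x' * fexp F y' in W *.
have hw : w - 1 \in F 1 by apply: expmul_F1.
have hw' : w' - 1 \in F 1 by apply: expmul_F1.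
have hww : eqF F k w w'.
  have := fgD hF (eqF_W hF (leqnSn k) W) (fgD hF hdx hdy); by rewrite subrK.
have L := log_lip hF hw hw' hww k0.
have bE : forall u v, BCH F u v = flog F (fexp F u * fexp F v) - (u + v).
  by move=> u v; rewrite /BCH opprD addrA.
rewrite -eqF_subE !bE -/w -/w' (sub4 (flog F w)) (subDD x).
rewrite -(subrr (x - x' + (y - y'))). apply: (eqF_B hF) => //.
  exact: (eqF_trans hF L W).
exact: (eqFxx hF).
Qed.

End G.
Section Poly.
Variables (K : fieldType) (charK0 : [pchar K] =i pred0).

Definition Tz m (g : {poly K}) := forall i, (i < m)%N -> g`_i = 0.

Lemma Tz0 m : Tz m 0.
Proof. by move=> i _; rewrite coef0. Qed.
Lemma TzD m g h : Tz m g -> Tz m h -> Tz m (g + h).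
Proof. by move=> hg hh i hi; rewrite coefD hg ?hh ?addr0. Qed.
Lemma TzN m g : Tz m g -> Tz m (- g).
Proof. by move=> hg i hi; rewrite coefN hg ?oppr0. Qed.
Lemma TzB m g h : Tz m g -> Tz m h -> Tz m (g - h).
Proof. by move=> hg hh; apply: TzD => //; apply: TzN. Qed.
Lemma TzZ m c g : Tz m g -> Tz m (c *: g).
Proof. by move=> hg i hi; rewrite coefZ hg ?mulr0. Qed.
Lemma TzW m n g : (m <= n)%N -> Tz n g -> Tz m g.
Proof. by move=> hmn hg i hi; apply: hg; apply: leq_trans hmn. Qed.
Lemma Tz_sum m (I : Type) (r : seq I) (P : pred I) (f : I -> {poly K}) :
  (forall i, P i -> Tz m (f i)) -> Tz m (\sum_(i <- r | P i) f i).
Proof.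
move=> h; apply: (big_ind (Tz m)) => //; [exact: Tz0 | by move=> ???; apply: TzD].
Qed.
Lemma TzMl m g h : Tz m g -> Tz m (h * g).
Proof.
move=> hg i hi; rewrite coefM big1 // => j _; rewrite hg ?mulr0 //.
by apply: leq_ltn_trans hi; apply: leq_subr.
Qed.
Lemma TzMr m g h : Tz m g -> Tz m (g * h).
Proof.
move=> hg i hi; rewrite coefM big1 // => j _; rewrite hg ?mul0r //.
by apply: leq_ltn_trans hi; rewrite -ltnS.
Qed.
Lemma TzMM m n g h : Tz m g -> Tz n h -> Tz (m + n) (g * h).
Proof.
move=> hg hh i hi; rewrite coefM big1 // => j _.
case: (ltnP j m) => hj; first by rewrite hg ?mul0r.
rewrite hh ?mulr0 //; have := ltn_ord j; lia.
Qed.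
Lemma TzX : Tz 1 'X.
Proof. by case=> // _; rewrite coefX. Qed.
Lemma TzXn n : Tz n 'X^n.
Proof. by move=> i hi; rewrite coefXn; case: eqP => // e; move: hi; rewrite e ltnn. Qed.
Lemma Tz_exp g k : Tz 1 g -> Tz k (g ^+ k).
Proof.
move=> hg; elim: k => [|k IH]; first by move=> i.
by rewrite exprS -add1n; apply: TzMM.
Qed.
Lemma Tz_deriv m g : Tz m g^`() -> g`_0 = 0 -> Tz m.+1 g.
Proof.
move=> hd h0 [|i] hi //; have := hd i hi; rewrite coef_deriv.
have /pcharf0P hc := charK0.
move/eqP; rewrite -mulr_natr mulf_eq0 hc orbF; by move/eqP.
Qed.

Lemma EsumS (R : lalgType K) N (x : R) :
  Esum N.+1 x = Esum N x + (N`!%:R)^-1 *: x ^+ N.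
Proof. by rewrite /Esum big_ord_recr. Qed.

Lemma Esum_split (R : lalgType K) N (x : R) :
  Esum N.+1 x = 1 + \sum_(i < N) (i.+1`!%:R)^-1 *: x ^+ i.+1.
Proof. by rewrite /Esum big_ord_recl /= expr0 invr1 scale1r. Qed.

Lemma TzE1 N (p : {poly K}) : Tz 1 p -> Tz 1 (Esum N.+1 p - 1).
Proof.
move=> hp; rewrite Esum_split addrC addKr; apply: Tz_sum => i _.
by apply: TzZ; apply: (TzW (n := i.+1)) => //; apply: Tz_exp.
Qed.

Lemma natK_neq0 n : (n.+1%:R : K) != 0.
Proof. by have /pcharf0P -> := charK0. Qed.

Lemma deriv_Esum n (p : {poly K}) : (Esum n.+1 p)^`() = p^`() * Esum n p.
Proof.
rewrite Esum_split derivD -polyC1 derivC add0r raddf_sum mulr_sumr.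
apply: eq_bigr => i _; rewrite /= derivZ deriv_exp /= -scalerMnr.
rewrite scalerMnl -scalerAr; congr (_ *: _).
rewrite factS natrM invfM -mulr_natr mulrAC mulVf ?mul1r //; exact: natK_neq0.
Qed.

Lemma IdA N : Tz N (Esum N (- 'X) * Esum N 'X - 1).
Proof.
case: N => [|n]; first by move=> i.
apply: Tz_deriv.
  rewrite derivB -polyC1 derivC subr0 derivM !deriv_Esum derivN derivX.
  rewrite !EsumS -!mul_polyC.
  set a := Esum n (- 'X); set b := Esum n 'X.
  set c := ((n`!%:R)^-1)%:P.
  have -> : (-1 * a) * (b + c * 'X^n) + (a + c * (- 'X) ^+ n) * (1 * b)
     = - (a * c) * 'X^n + c * b * (- 'X) ^+ n by ring.
  apply: TzD; first by apply: TzMl; apply: TzXn.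
  by apply: TzMl; apply: Tz_exp; apply: TzN; apply: TzX.
have h1 := TzE1 n (TzN TzX); have h2 := TzE1 n TzX.
set a := Esum n.+1 (- 'X) in h1 *; set b := Esum n.+1 'X in h2 *.
have -> : a * b - 1 = (a - 1) * (b - 1) + (a - 1) + (b - 1) by ring.
suff H : Tz 1 ((a - 1) * (b - 1) + (a - 1) + (b - 1)) by apply: H.
apply: TzD => //; apply: TzD => //; exact: TzMr h1.
Qed.

Lemma deriv_Lsum N (p : {poly K}) : (Lsum N p)^`() = p^`() * \sum_(k < N) (- p) ^+ k.
Proof.
rewrite /Lsum raddf_sum mulr_sumr; apply: eq_bigr => i _.
rewrite /= derivZ deriv_exp /= -scalerMnr scalerMnl -mulr_natr -mulrA mulVf ?mulr1;
  last exact: natK_neq0.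
by rewrite -scaleN1r exprZn scalerAr.
Qed.

Lemma geom N (p : {poly K}) : (1 + p) * \sum_(k < N) (- p) ^+ k = 1 - (- p) ^+ N.
Proof.
elim: N => [|N IH]; first by rewrite big_ord0 mulr0 expr0 subrr.
rewrite big_ord_recr /= mulrDr IH exprSr; ring.
Qed.

Lemma IdB N : Tz N (Lsum N (Esum N 'X - 1) - 'X).
Proof.
case: N => [|n]; first by move=> i.
have he := TzE1 n TzX.
set e := Esum n.+1 'X - 1 in he *.
apply: Tz_deriv.
  rewrite derivB derivX deriv_Lsum.
  have -> : e^`() = 1 + e - ((n`!%:R)^-1)%:P * 'X^n.
    rewrite /e derivB -polyC1 derivC subr0 deriv_Esum derivX mul1r /e EsumS.
    rewrite mul_polyC; ring.
  set G := \sum_(k < n.+1) (- e) ^+ k.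
  have hg := geom n.+1 e; rewrite -/G in hg.
  have -> : (1 + e - ((n`!%:R)^-1)%:P * 'X^n) * G - 1 =
     - (- e) ^+ n.+1 - ((n`!%:R)^-1)%:P * G * 'X^n.
    by rewrite mulrBl hg; ring.
  apply: TzB; last by apply: TzMl; apply: TzXn.
  by apply: TzN; apply: (TzW (n := n.+1)) => //; apply: Tz_exp; apply: TzN.
have : Tz 1 (Lsum n.+1 e - 'X).
  apply: TzB; last exact: TzX.
  apply: Tz_sum => i _; apply: TzZ; apply: (TzW (n := i.+1)) => //.
  exact: Tz_exp.
by apply.
Qed.

End Poly.
Section H.
Variables (K : fieldType) (charK0 : [pchar K] =i pred0).
Variables (A : unitAlgType K) (F : nat -> {pred A}) (hF : FG F).

Lemma heval_X (x : A) : horner_alg x 'X = x.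
Proof. exact: horner_algX. Qed.

Lemma heval_mono (x : A) c i : horner_alg x (c *: 'X^i) = c *: x ^+ i.
Proof. by rewrite linearZ /= rmorphXn /= horner_algX mulr_algl. Qed.

Lemma Tz_eval x g m : x \in F 1 -> Tz m g -> horner_alg x g \in F m.
Proof.
move=> hx hg; rewrite -[g]coefK poly_def rmorph_sum.
apply: (fsum hF) => i _; rewrite /= heval_mono.
case: (ltnP i m) => hi; first by rewrite hg // scale0r; apply: (fgz hF).
by apply: (fZ hF); apply: (fW hF hi); apply: (fX1 hF).
Qed.

Lemma heval_E (x : A) N p : horner_alg x (Esum N p) = Esum N (horner_alg x p).
Proof.
by rewrite /Esum rmorph_sum; apply: eq_bigr => i _; rewrite /= linearZ /= rmorphXn mulr_algl.
Qed.

Lemma heval_L (x : A) N p : horner_alg x (Lsum N p) = Lsum N (horner_alg x p).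
Proof.
by rewrite /Lsum rmorph_sum; apply: eq_bigr => i _; rewrite /= linearZ /= rmorphXn mulr_algl.
Qed.

Lemma exp_neg x : x \in F 1 -> fexp F (- x) * fexp F x = 1.
Proof.
move=> hx; apply: (eqF_sep hF) => N.
apply: (eqF_trans hF (y := Esum N (- x) * Esum N x)).
  apply: (eqF_M hF); last exact: (exp_tail hF).
  by apply: (exp_tail hF); apply: (fN hF).
have := Tz_eval hx (@IdA K charK0 N).
by rewrite rmorphB rmorphM rmorph1 /= !heval_E rmorphN /= horner_algX.
Qed.

Lemma exp_neg' x : x \in F 1 -> fexp F x * fexp F (- x) = 1.
Proof.
move=> hx; have := exp_neg (fN hF hx); by rewrite opprK.
Qed.

Lemma Lsum_cong N M z z' : eqF F N z z' -> eqF F N (Lsum M z) (Lsum M z').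
Proof.
move=> h; rewrite /eqF Lsum_B; apply: (fsum hF) => i _; apply: (fZ hF).
exact: (fXB hF).
Qed.

Lemma log_exp x : x \in F 1 -> flog F (fexp F x) = x.
Proof.
move=> hx; apply: (eqF_sep hF) => N.
have he := exp_F1 hF hx.
apply: (eqF_trans hF (log_tail hF he N)).
apply: (eqF_trans hF (y := Lsum N (Esum N x - 1))).
  by apply: Lsum_cong; apply: (eqF_B hF); [apply: (exp_tail hF)|apply: (eqFxx hF)].
have := Tz_eval hx (@IdB K charK0 N).
by rewrite rmorphB /= heval_L rmorphB rmorph1 /= heval_E horner_algX.
Qed.

Lemma log_inj y y' : y - 1 \in F 1 -> y' - 1 \in F 1 -> flog F y = flog F y' -> y = y'.
Proof.
move=> hy hy' e; apply: (eqF_sep hF) => n.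
suff H : forall k, eqF F k.+1 y y'.
  by case: n => [|n]; [apply: (fg0 hF) | apply: H].
elim=> [|k IH].
  by apply: (eqF_trans hF hy); apply: (eqF_sym hF).
have := log_lip hF hy hy' IH (ltn0Sn k); rewrite e subrr.
by move/(eqF_sym hF); rewrite /eqF subr0.
Qed.

Lemma exp_log y : y - 1 \in F 1 -> fexp F (flog F y) = y.
Proof.
move=> hy; apply: log_inj => //.
  by apply: (exp_F1 hF); apply: (log_F1 hF).
by rewrite log_exp //; apply: (log_F1 hF).
Qed.

End H.
Lemma zid1 (V : zmodType) (S W R : V) : S - (- W + S + R) + R = W.
Proof. by rewrite !opprD !opprK addrA subrK subrKC. Qed.

Section Key.
Variables (K : fieldType) (A : unitAlgType K) (theta : K) (Q : A -> A).
Hypothesis Qlin : forall (r : K) x y, Q (r *: x + y) = r *: Q x + Q y.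
Hypothesis RBQ : rota_baxter theta Q.

Lemma QD x y : Q (x + y) = Q x + Q y.
Proof. by rewrite -[x]scale1r Qlin !scale1r. Qed.
Lemma Q0 : Q 0 = 0.
Proof. by apply/eqP; rewrite -[X in _ == X](subrr (Q 0)) -{2}[0](addr0 0) QD addrK. Qed.
Lemma QZ r x : Q (r *: x) = r *: Q x.
Proof. by rewrite -[r *: x]addr0 Qlin Q0 addr0. Qed.
Lemma QN x : Q (- x) = - Q x.
Proof. by rewrite -scaleN1r QZ scaleN1r. Qed.
Lemma QB x y : Q (x - y) = Q x - Q y.
Proof. by rewrite QD QN. Qed.
Lemma Qsum (I : Type) (r : seq I) (P : pred I) (f : I -> A) :
  Q (\sum_(i <- r | P i) f i) = \sum_(i <- r | P i) Q (f i).
Proof. exact: (big_morph Q QD Q0). Qed.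

Lemma key_pow1 u k :
  Q ((theta *: u - Q u) ^+ k.+1 - (- Q u) ^+ k.+1) = - theta *: (- Q u) ^+ k.+1.
Proof.
set q := - Q u; set w := theta *: u.
elim: k => [|k IH].
  by rewrite !expr1 addrK QZ scaleNr /q scalerN opprK.
set d := (w + q) ^+ k.+1 - q ^+ k.+1 in IH *.
set m := q ^+ k.+1 in d IH *.
have -> : (w + q) ^+ k.+2 - q ^+ k.+2 = d * (w + q) + m * w.
  rewrite /d /m mulrBl [q ^+ k.+1 * (w + q)]mulrDr [(w + q) ^+ k.+2]exprSr [q ^+ k.+2]exprSr.
  by rewrite opprD addrA addrAC subrK.
rewrite QD mulrDr QD /w -!scalerAr !QZ mulrN QN.
have rb := RBQ d u.
have e : Q (d * Q u) = Q d * Q u + theta *: Q (d * u) - Q (Q d * u).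
  by rewrite rb addrK.
rewrite e IH -!scalerAl QZ [q ^+ k.+2]exprSr /q mulrN.
set s := Q (d * u); set r := Q (m * u); set v := m * Q u.
rewrite !scaleNr scalerN !opprK.
by rewrite zid1.
Qed.

Lemma key_pow u k :
  Q ((theta *: u - Q u) ^+ k - (- Q u) ^+ k) = - theta *: ((- Q u) ^+ k - (k == 0%N)%:R).
Proof.
case: k => [|k].
  by rewrite !expr0 subrr Q0 scaler0.
by rewrite key_pow1 /= subr0.
Qed.

End Key.
Lemma zid2 (V : zmodType) (A1 B C E f g : V) :
  A1 - B - C + (f + g - E) + (A1 - E) = (A1 - B + (- E + f)) + (A1 - C + (- E + g)).
Proof.
rewrite [- E + f]addrC [- E + g]addrC !addrA.
rewrite -[A1 - B - C + f]addrAC.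
rewrite -[A1 - B + f - C + g - E + A1]addrAC.
rewrite -[A1 - B + f - C + g + A1]addrAC.
rewrite -[A1 - B + f - C + A1]addrAC.
rewrite [A1 - B + f + A1 - C + g - E]addrAC.
rewrite [A1 - B + f + A1 - C - E]addrAC.
by rewrite [A1 - B + f + A1 - E]addrAC.
Qed.

Section Pt.
Variables (K : fieldType) (A : unitAlgType K) (theta : K) (P : {linear A -> A}).

Lemma Pt_lin (r : K) x y :
  Ptilde theta P (r *: x + y) = r *: Ptilde theta P x + Ptilde theta P y.
Proof.
rewrite /Ptilde (linearP P) /= (scalerDr theta) (scalerBr r) !scalerA mulrC.
by rewrite subDD.
Qed.

Lemma RB_Pt : rota_baxter theta P -> rota_baxter theta (Ptilde theta P).
Proof.
move=> RB x y; rewrite /Ptilde.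
have h1 : (theta *: x - P x) * (theta *: y - P y) =
   theta *: (theta *: (x * y)) - theta *: (x * P y) - theta *: (P x * y) + P x * P y.
  rewrite mulrBl !mulrBr -!scalerAl -!scalerAr.
  by rewrite opprB addrA [_ + P x * P y - _]addrAC.
have h2 : x * (theta *: y - P y) = theta *: (x * y) - x * P y.
  by rewrite mulrBr scalerAr.
have h3 : (theta *: x - P x) * y = theta *: (x * y) - P x * y.
  by rewrite mulrBl scalerAl.
rewrite h1 h2 h3 !linearB !linearZ /=.
have hd : P x * P y = P (x * P y) + P (P x * y) - theta *: P (x * y).
  by rewrite -RB addrK.
rewrite hd !scalerN !opprK.
exact: zid2.
Qed.

End Pt.
Section KeyExp.
Variables (K : fieldType) (A : unitAlgType K) (F : nat -> {pred A}) (hF : FG F).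
Variables (theta : K) (Q : A -> A).
Hypothesis Qlin : forall (r : K) x y, Q (r *: x + y) = r *: Q x + Q y.
Hypothesis RBQ : rota_baxter theta Q.
Hypothesis hQ : forall n x, x \in F n -> Q x \in F n.

Lemma key_exp u : u \in F 1 ->
  Q (fexp F (theta *: u - Q u) - fexp F (- Q u)) = - theta *: (fexp F (- Q u) - 1).
Proof.
move=> hu.
have hq : - Q u \in F 1 by apply: (fN hF); apply: hQ.
have ht : theta *: u - Q u \in F 1 by apply: (fB hF); [apply: (fZ hF)|apply: hQ].
apply: (eqF_sep hF) => -[|n]; first exact: (fg0 hF).
set t := theta *: u - Q u in ht *; set q := - Q u in hq *.
have e1 : Q (Esum n.+1 t - Esum n.+1 q) = - theta *: (Esum n.+1 q - 1).
  rewrite Esum_B (Qsum Qlin).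
  rewrite [Esum _ q]Esum_split [1 + _]addrC addrK scaler_sumr big_ord_recl /=.
  rewrite QZ // key_pow // expr0 subrr scaler0 scaler0 add0r.
  apply: eq_bigr => i _; rewrite QZ // key_pow // /= subr0.
  by rewrite !scalerA mulrC.
apply: (eqF_trans hF (y := Q (Esum n.+1 t - Esum n.+1 q))).
  rewrite /eqF -(QB Qlin); apply: hQ.
  by apply: (eqF_B hF); apply: (exp_tail hF).
rewrite e1; apply: (eqF_Z hF); apply: (eqF_B hF); last exact: (eqFxx hF).
by apply: (eqF_sym hF); apply: (exp_tail hF).
Qed.

Lemma contr_uniq (h : A -> A) y x :
  (forall n z z', eqF F n z z' -> eqF F n.+1 (h z) (h z')) ->
  y = h y -> x = h x -> y = x.
Proof.
move=> H hy hx; apply: (eqF_sep hF); elim=> [|n IH]; first exact: (fg0 hF).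
by have := H n y x IH; rewrite -hy -hx.
Qed.

End KeyExp.

Section Chi.
Variables (K : fieldType) (A : unitAlgType K) (F : nat -> {pred A}) (hF : FG F).
Variables (theta : K) (P : {linear A -> A}).
Hypothesis hP : forall n x, x \in F n -> P x \in F n.
Variables (a : A) (ha : a \in F 1).

Lemma hPt n x : x \in F n -> Ptilde theta P x \in F n.
Proof. by move=> hx; apply: (fB hF); [apply: (fZ hF)|apply: hP]. Qed.

Lemma Pt_B x y : Ptilde theta P x - Ptilde theta P y = Ptilde theta P (x - y).
Proof. by rewrite /Ptilde sub4 (raddfB P) scalerBr. Qed.

Let step := chi_step F theta P a.

Lemma step_F1 c : c \in F 1 -> step c \in F 1.
Proof.
move=> hc; apply: (fB hF) => //; apply: (fZ hF); apply: (bch_F1 hF).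
  exact: hP.
exact: hPt.
Qed.

Lemma step_lip c c' k : c \in F 1 -> c' \in F 1 -> eqF F k c c' -> (0 < k)%N ->
  eqF F k.+1 (step c) (step c').
Proof.
move=> hc hc' hd k0; apply: (eqF_B hF); first exact: (eqFxx hF).
apply: (eqF_Z hF); apply: (bch_lip hF) => //; try exact: hP; try exact: hPt.
  by rewrite /eqF -raddfB; apply: hP.
by rewrite /eqF Pt_B; apply: hPt.
Qed.

Lemma iter_F1 n : iter n step a \in F 1.
Proof. by elim: n => [|n IH] //=; apply: step_F1. Qed.

Lemma iter_cauchy n : eqF F n.+1 (iter n.+1 step a) (iter n step a).
Proof.
elim: n => [|n IH].
  by rewrite /eqF; apply: (fB hF); [exact: (iter_F1 1) | exact: ha].
by apply: step_lip => //; [exact: (iter_F1 n.+1) | exact: (iter_F1 n)].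
Qed.

Lemma chi_tail n : eqF F n (chi F theta P a) (iter n step a).
Proof.
apply: (flim_tail hF) => m; apply: (eqF_W hF (leqnSn m)); exact: iter_cauchy.
Qed.

Lemma chi_F1 : chi F theta P a \in F 1.
Proof.
have := fgD hF (chi_tail 1) (iter_F1 1); by rewrite subrK.
Qed.

Lemma chi_fix : chi F theta P a = step (chi F theta P a).
Proof.
have hc := chi_F1.
apply: (eqF_sep hF) => -[|k]; first exact: (fg0 hF).
apply: (eqF_trans hF (y := iter k.+1 step a)); first exact: chi_tail.
apply: (eqF_sym hF); rewrite iterS.
case: k => [|k].
  by rewrite /eqF; apply: (fB hF); apply: step_F1 => //; apply: iter_F1.
apply: step_lip => //; first exact: (iter_F1 k.+1).
exact: (chi_tail k.+1).
Qed.

End Chi.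
Theorem proposition2p12 (K : fieldType) (charK0 : [pchar K] =i pred0)
  (theta : K) (theta_neq0 : theta != 0)
  (A : unitAlgType K) (P : {linear A -> A}) (F : nat -> {pred A})
  (RB : rota_baxter theta P) (filt : rb_filtration F P)
  (compl : filt_complete F) :
  forall a : A, a \in F 1%N ->
  let c := chi F theta P a in
  let Pt := Ptilde theta P in
  [/\ c = a + theta^-1 *: BCH F (- P c) (theta *: a),
      fexp F (theta *: a) = fexp F (P c) * fexp F (Pt c) &
      let b := theta^-1 *: (fexp F (theta *: a) - 1) in
      let x := (fexp F (P c))^-1 in
      let x' := (fexp F (Pt c))^-1 in
      [/\ fexp F (P c) \is a GRing.unit /\ fexp F (Pt c) \is a GRing.unit,
          x = 1 - P (x * b), x' = 1 - Pt (b * x'),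
          forall y, y = 1 - P (y * b) -> y = x &
          forall y', y' = 1 - Pt (b * y') -> y' = x']].
Proof.
move=> a ha c Pt.
have hF := FG_of filt compl.
have hP : forall n x, x \in F n -> P x \in F n.
  by case: filt => _ [].
have cF1 : c \in F 1 := chi_F1 hF theta hP ha.
have cfix : c = chi_step F theta P a c := chi_fix hF theta hP ha.
have hpc : P c \in F 1 by apply: hP.
have hptc : Pt c \in F 1 by apply: (hPt hF theta hP).
have hsum : P c + Pt c = theta *: c by rewrite /Pt /Ptilde addrC subrK.
have hw := expmul_F1 hF hpc hptc.
have hta : theta *: a = flog F (fexp F (P c) * fexp F (Pt c)).
  have e1 : theta *: c = theta *: a - BCH F (P c) (Pt c).
    by rewrite {1}cfix /chi_step scalerBr scalerA mulfV // scale1r.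
  have bE : BCH F (P c) (Pt c) = flog F (fexp F (P c) * fexp F (Pt c)) - theta *: c.
    by rewrite /BCH -addrA -opprD hsum.
  by rewrite -[theta *: a](subrK (BCH F (P c) (Pt c))) -e1 bE subrKC.
have e2 : fexp F (theta *: a) = fexp F (P c) * fexp F (Pt c).
  by rewrite hta (exp_log charK0 hF).
have hnpc : - P c \in F 1 by apply: (fN hF).
have hnptc : - Pt c \in F 1 by apply: (fN hF).
split => //.
  rewrite /BCH e2 mulrA (exp_neg charK0 hF hpc) mul1r (log_exp charK0 hF hptc).
  rewrite opprK [Pt c + _]addrC hsum -scalerBr scalerA mulVf // scale1r.
  by rewrite subrKC.
move=> b x x'.
have u1 : fexp F (P c) \is a GRing.unit.
  apply/unitrP; exists (fexp F (- P c)); split.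
    exact: (exp_neg charK0 hF).
  exact: (exp_neg' charK0 hF).
have u2 : fexp F (Pt c) \is a GRing.unit.
  apply/unitrP; exists (fexp F (- Pt c)); split.
    exact: (exp_neg charK0 hF).
  exact: (exp_neg' charK0 hF).
have ix : x = fexp F (- P c).
  by rewrite -[fexp F (- P c)](mulrK u1) (exp_neg charK0 hF hpc) mul1r.
have ix' : x' = fexp F (- Pt c).
  by rewrite -[fexp F (- Pt c)](mulrK u2) (exp_neg charK0 hF hptc) mul1r.
have hb : b = theta^-1 *: (fexp F (P c) * fexp F (Pt c) - 1) by rewrite /b e2.
have hbF : b \in F 1 by rewrite hb; apply: (fZ hF).
have Plin : forall (r : K) x y, P (r *: x + y) = r *: P x + P y.
  by move=> r y z; rewrite linearP.
have Ptlin : forall (r : K) x y, Pt (r *: x + y) = r *: Pt x + Pt y.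
  by move=> r y z; rewrite /Pt Pt_lin.
have Ex : x = 1 - P (x * b).
  rewrite ix hb -scalerAr mulrBr mulr1 mulrA (exp_neg charK0 hF hpc) mul1r.
  rewrite (QZ Plin).
  have K1 : P (fexp F (Pt c) - fexp F (- P c)) = - theta *: (fexp F (- P c) - 1)
    := key_exp hF Plin RB hP cF1.
  rewrite K1 scalerA mulrN mulVf // scaleN1r opprK.
  by rewrite subrKC.
have Ex' : x' = 1 - Pt (b * x').
  rewrite ix' hb -scalerAl mulrBl mul1r -mulrA (exp_neg' charK0 hF hptc) mulr1.
  rewrite (QZ Ptlin).
  have e3 : theta *: c - Pt c = P c by rewrite /Pt /Ptilde opprB subrKC.
  have K2 := key_exp hF Ptlin (RB_Pt RB) (hPt hF theta hP) cF1.
  rewrite -/Pt e3 in K2.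
  rewrite K2 scalerA mulrN mulVf // scaleN1r opprK.
  by rewrite subrKC.
split => //.
- move=> y hy; apply: (contr_uniq hF (h := fun z => 1 - P (z * b))) => //.
  move=> n z z' hd; apply: (eqF_B hF); first exact: (eqFxx hF).
  rewrite /eqF -raddfB -mulrBl; apply: hP; rewrite -addn1; exact: (fgM hF).
- move=> y hy; apply: (contr_uniq hF (h := fun z => 1 - Pt (b * z))) => //.
  move=> n z z' hd; apply: (eqF_B hF); first exact: (eqFxx hF).
  rewrite /eqF Pt_B -mulrBr; apply: (hPt hF theta hP); rewrite -add1n; exact: (fgM hF).
Qed.
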